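(* Let $n\ge2$, $0<k_0<\infty$, and let $\mathbf{Q}$ be the $(n+1)\times(n+1)$ symmetric tridiagonal matrix with $Q_{11}=1+1/k_0$, $Q_{ll}=2$ for $l=2,\dots,n$, $Q_{n+1,n+1}=1$, $Q_{lm}=-1$ if $|l-m|=1$, and $Q_{lm}=0$ otherwise. Let $\mathbb{E}_q[z_{j1}],\dots,\mathbb{E}_q[z_{jn}]>0$ and $\mu_{q(1/\xi_j^2)}>0$, and set $$\boldsymbol{\Sigma}_{q(\omega_j)}=\big(\mathsf{Diag}(0,\mathbb{E}_q[z_{j1}],\dots,\mathbb{E}_q[z_{jn}])+\mu_{q(1/\xi_j^2)}\mathbf{Q}\big)^{-1}.$$ Then $\boldsymbol{\Sigma}_{q(\omega_j)}$ is a positive matrix, i.e. $[\boldsymbol{\Sigma}_{q(\omega_j)}]_{ik}\ge0$ for all $i,k$.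
   Context: In the paper, $\mathbb{E}_q[z_{jt}]$ are means of Pólya–Gamma variational factors and $\mu_{q(1/\xi_j^2)}$ is a variational mean of an inverse-gamma precision, so both are positive; $\boldsymbol{\Sigma}_{q(\omega_j)}$ is the covariance of the optimal Gaussian variational factor of $\boldsymbol{\omega}_j$. *)

(* Defs.v *)
From HB Require Import structures.
From mathcomp Require Import all_boot all_order all_algebra.
Set Implicit Arguments. Unset Strict Implicit. Unset Printing Implicit Defensive.
Import Order.TTheory GRing.Theory Num.Theory.
Local Open Scope ring_scope.

(* Indices are 0-based: paper index l (1..n+1) is i = l-1 : 'I_(n.+1). *)

Definition Qmat (R : realFieldType) (n : nat) (k0 : R) : 'M[R]_(n.+1) :=
  \matrix_(i < n.+1, j < n.+1)
    if i == j then
      (if (i : nat) == 0%N then 1 + k0^-1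
       else if (i : nat) == n then 1 else 2)
    else if ((i : nat) == j.+1) || ((j : nat) == i.+1) then -1 else 0.

(* Diag(0, e_1, ..., e_n), with e : 'I_n -> R (e l = E_q[z_{j,l+1}]);
   diagonal entry at index i is 0 for i = 0 and e (i-1) otherwise. *)
Definition Dmat (R : realFieldType) (n : nat) (e : 'I_n -> R) : 'M[R]_(n.+1) :=
  \matrix_(i < n.+1, j < n.+1)
    if i == j then
      (match unlift ord0 i with None => 0 | Some l => e l end)
    else 0.

Definition Sigma_q (R : realFieldType) (n : nat) (k0 mu : R) (e : 'I_n -> R)
  : 'M[R]_(n.+1) := invmx (Dmat e + mu *: Qmat n k0).

(* Main.v *)
Require Import Defs.
From HB Require Import structures.
From mathcomp Require Import all_boot all_order all_algebra.
From mathcomp Require Import zify ring lra.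
Import Order.TTheory GRing.Theory Num.Theory.
Local Open Scope ring_scope.

Lemma sumA (R : realFieldType) (m a : nat) :
  \sum_(i < m) (((i:nat) == a)%:R : R) = ((a < m)%N)%:R.
Proof.
elim: m => [|m IH]; first by rewrite big_ord0.
rewrite big_ord_recr /= IH.
have [h|h|->] := ltngtP a m.
- by rewrite ltnS ltnW // addr0.
- by rewrite ltnS leqNgt h addr0.
- by rewrite ltnSn add0r.
Qed.

Lemma sumB (R : realFieldType) (m a : nat) :
  \sum_(i < m) ((a == (i:nat).+1)%:R : R) = ((0 < a <= m)%N)%:R.
Proof.
case: a => [|a].
  by rewrite big1 //= => i _.
by under eq_bigr do rewrite eqSS eq_sym; rewrite sumA.
Qed.

Lemma Qpt (R : realFieldType) n (k0 : R) (i j : 'I_n.+1) :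
  Qmat n k0 i j = (i == j)%:R * Qmat n k0 j j - ((i:nat) == j.+1)%:R
                  - ((j:nat) == i.+1)%:R.
Proof.
rewrite !mxE eqxx.
have [->|hij] := eqVneq i j.
  have -> : ((j:nat) == j.+1) = false by apply/eqP; lia.
  by rewrite mul1r !subr0.
rewrite mul0r.
have hij' : (i:nat) != j by [].
have [h1|h1] := boolP ((i:nat) == j.+1); have [h2|h2] := boolP ((j:nat) == i.+1);
  rewrite ?(negbTE h1) ?(negbTE h2) ?h1 ?h2 /=; try lra; lia.
Qed.
Lemma Mmat_inv_ge0 (R : realFieldType) m (A : 'M[R]_m.+1) :
 (forall i j, i != j -> A i j <= 0) -> (forall j, 0 < \sum_i A i j) ->
 forall i k, 0 <= invmx A i k.
Proof.
move=> hoff hcol.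
have key: forall v : 'rV_m.+1, (forall j, 0 <= (v *m A) 0 j) -> forall j, 0 <= v 0 j.
  move=> v hb.
  case: (@arg_minP _ R _ ord0 predT (fun j => v 0 j) isT) => j0 _ hmin.
  suff: 0 <= v 0 j0 by move=> h j; exact: le_trans h (hmin j isT).
  rewrite leNgt; apply/negP => hneg.
  have := hb j0; rewrite mxE; apply/negP; rewrite -ltNge.
  apply: (@le_lt_trans _ _ (\sum_i v 0 j0 * A i j0)).
    apply: ler_sum => i _.
    have [->|hij] := eqVneq i j0; first by [].
    by apply: ler_wnM2r; [exact: hoff | exact: hmin].
  by rewrite -mulr_sumr nmulr_rlt0 // hcol.
have hu : A \in unitmx.
  rewrite -row_free_unit; apply/inj_row_free => v hv0.
  have h1 := key v _; have h2 := key (- v) _.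
  have {h1}h1 : forall j, 0 <= v 0 j by apply: h1 => j; rewrite hv0 mxE.
  have {h2}h2 : forall j, 0 <= (- v) 0 j by apply: h2 => j; rewrite mulNmx hv0 oppr0 mxE.
  apply/matrixP => i j; rewrite [i]ord1 mxE; apply/le_anti.
  rewrite h1 andbT. by have := h2 j; rewrite mxE oppr_ge0.
move=> i k.
have := key (row i (invmx A)).
rewrite -row_mul mulVmx // => /(_ _ k); rewrite mxE; apply => j.
by rewrite !mxE ler0n.
Qed.

Lemma hA (R : realFieldType) n (mu : R) (D Q : 'M[R]_n.+1) i j :
  (D + mu *: Q) i j = D i j + mu * Q i j.
Proof. by rewrite !mxE. Qed.

Lemma Dpos (R : realFieldType) n (e : 'I_n -> R) (he : forall l, 0 < e l)
  (j : 'I_n.+1) : (j:nat) != 0%N -> 0 < Dmat e j j.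
Proof.
move=> hj; rewrite mxE eqxx; case: unliftP => [l _|hj0]; first exact: he.
by rewrite hj0 in hj.
Qed.

Lemma Dge0 (R : realFieldType) n (e : 'I_n -> R) (he : forall l, 0 < e l)
  (j : 'I_n.+1) : 0 <= Dmat e j j.
Proof.
rewrite mxE eqxx; case: unliftP => [l _|hj0] //; exact: ltW.
Qed.

Lemma colsum (R : realFieldType) n (k0 mu : R) (e : 'I_n -> R) (j : 'I_n.+1) :
  \sum_i (Dmat e + mu *: Qmat n k0) i j =
  Dmat e j j + mu * (Qmat n k0 j j - ((j < n)%N)%:R - ((0 < j)%N)%:R).
Proof.
under eq_bigr do rewrite hA.
rewrite big_split /= -mulr_sumr.
congr (_ + _ * _).
  rewrite (bigD1 j) //= big1 ?addr0 // => i hij; by rewrite mxE (negbTE hij).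
under eq_bigr do rewrite Qpt.
rewrite !sumrB -mulr_suml sumA (_ : (\val j < n.+1)%N = true); last exact: ltn_ord.
rewrite mul1r sumA ltnS sumB.
have -> : (0 < j <= n.+1)%N = (0 < j)%N by rewrite (ltnW (ltn_ord j)) andbT.
by [].
Qed.

Theorem lemma2 (R : realFieldType) (n : nat) (k0 mu : R) (e : 'I_n -> R)
  (hn : (2 <= n)%N) (hk0 : 0 < k0) (he : forall l, 0 < e l) (hmu : 0 < mu) :
  forall i k : 'I_n.+1, 0 <= Sigma_q k0 mu e i k.
Proof.
rewrite /Sigma_q; apply: Mmat_inv_ge0.
  move=> i j hij; rewrite hA Qpt [Dmat e i j]mxE (negbTE hij) mul0r sub0r add0r.
  rewrite -opprD mulrN oppr_le0; apply: mulr_ge0; first exact: ltW.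
  by apply: addr_ge0; apply: ler0n.
move=> j; rewrite colsum.
have hD := @Dge0 _ _ e he j.
have [hj0|hj0] := eqVneq (j:nat) 0%N.
  have hq : Qmat n k0 j j = 1 + k0^-1 by rewrite mxE eqxx hj0.
  rewrite hq hj0 (_ : (0 < n)%N = true); last by lia.
  have : 0 < mu * k0^-1 by apply: mulr_gt0 => //; rewrite invr_gt0.
  rewrite /=; lra.
have hDp := @Dpos _ _ e he j hj0.
have [hjn|hjn] := eqVneq (j:nat) n.
  have hq : Qmat n k0 j j = 1 by rewrite mxE eqxx (negbTE hj0) hjn eqxx.
  rewrite hq hjn ltnn (_ : (0 < n)%N = true); last by lia.
  rewrite /=; lra.
have hq : Qmat n k0 j j = 2 by rewrite mxE eqxx (negbTE hj0) (negbTE hjn).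
rewrite hq (_ : (j < n)%N = true); last by have := ltn_ord j; lia.
rewrite (_ : (0 < j)%N = true); last by lia.
rewrite /=; lra.
Qed.
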